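(* Let $(x_n)_{n\in\mathbb N}$ be a block sequence in $J$, let $0<\epsilon<1$ and $\alpha>0$. Assume $I_\infty^*(x_n)=0$ and $\big|\|x_n\|-\alpha\big|<\alpha\epsilon$ for all $n$. Then for every finitely supported sequence of reals $(\lambda_n)$, $(1-\epsilon)\alpha\big(\sum_n\lambda_n^2\big)^{1/2}\le\big\|\sum_n\lambda_nx_n\big\|\le\sqrt2(1+\epsilon)\alpha\big(\sum_n\lambda_n^2\big)^{1/2}$. In particular $(x_n)$ is equivalent to the unit vector basis of $\ell_2$.
   Context: The James space $J$ is the space of real sequences $x=(x(n))_{n\in\mathbb N}$ with $\|x\|=\sup\big(\sum_{i=1}^m|\sum_{k\in I_i}x(k)|^2\big)^{1/2}<\infty$, the supremum taken over all $m$ and all pairwise disjoint finite intervals $I_1,\dots,I_m$ of $\mathbb N$. The unit vectors $(e_n)$ form a basis of $J$; a block sequence is a sequence of nonzero finitely supported vectors with $\max\operatorname{supp}x_n<\min\operatorname{supp}x_{n+1}$. $I_\infty^*\in J^*$ is the functional $I_\infty^*(x)=\sum_{n=1}^\infty x(n)$. *)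

(* Defs.v *)
From HB Require Import structures.
From mathcomp Require Import all_boot all_order all_algebra.
From mathcomp Require Import all_classical all_reals all_analysis.
Set Implicit Arguments. Unset Strict Implicit. Unset Printing Implicit Defensive.
Import Order.TTheory GRing.Theory Num.Theory.
Local Open Scope ring_scope.
Local Open Scope classical_set_scope.

(* A finite interval [a, b] = {a, ..., b} of nat is encoded by the pair (a, b) with a <= b. *)
Definition interval_sum {R : realType} (x : nat -> R) (I : nat * nat) : R :=
  \sum_(I.1 <= k < I.2.+1) x k.

Definition disj_intervals (I J : nat * nat) : bool := (I.2 < J.1)%N || (J.2 < I.1)%N.

Definition admissible (Is : seq (nat * nat)) : bool :=
  all (fun I : nat * nat => (I.1 <= I.2)%N) Is && pairwise disj_intervals Is.

(* The James norm: sup over families of pairwise disjoint finite intervals of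
   (sum_i |sum_{k in I_i} x(k)|^2)^{1/2}.  (Finite for finitely supported x.) *)
Definition Jnorm {R : realType} (x : nat -> R) : R :=
  Num.sqrt (sup [set s : R | exists Is : seq (nat * nat),
     admissible Is /\ s = \sum_(I <- Is) (interval_sum x I) ^+ 2]).

Definition fin_supp {R : realType} (x : nat -> R) : Prop :=
  exists N : nat, forall k, (N <= k)%N -> x k = 0.

Definition block_seq {R : realType} (xs : nat -> nat -> R) : Prop :=
  (forall n, fin_supp (xs n)) /\
  (forall n, exists k, xs n k != 0) /\
  (forall n i j, xs n i != 0 -> xs n.+1 j != 0 -> (i < j)%N).

Definition Iinf {R : realType} (x : nat -> R) : R := limn (fun n => \sum_(k < n) x k).

(* Main.v *)
Require Import Defs.
From HB Require Import structures.
From mathcomp Require Import all_boot all_order all_algebra.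
From mathcomp Require Import all_classical all_reals all_analysis.
From mathcomp Require Import lra zify.
Import Order.TTheory GRing.Theory Num.Theory.
Local Open Scope ring_scope.
Local Open Scope classical_set_scope.

Section H.
Context {R : realType}.
Implicit Types x : nat -> R.

Lemma widen_zero (G : nat -> R) n K : (n <= K)%N ->
  (forall k, (n <= k)%N -> (k < K)%N -> G k = 0) ->
  \sum_(k < K) G k = \sum_(k < n) G k.
Proof.
move=> nK H0; rewrite -!(big_mkord xpredT) (@big_cat_nat _ _ _ n 0 K _ _ (leq0n n) nK) /=.
rewrite [X in _ + X]big1_seq ?addr0 // => k /andP[_].
by rewrite mem_index_iota => /andP[]; exact: H0.
Qed.

Lemma isum_cut x M I : (forall k, (M <= k)%N -> x k = 0) ->
  interval_sum x I = \sum_(k < M) (if (I.1 <= k <= I.2)%N then x k else 0).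
Proof.
move=> HM; rewrite /interval_sum big_geq_mkord big_mkcond /=.
set K := maxn M I.2.+1.
pose F k := (if (I.1 <= k <= I.2)%N then x k else 0).
transitivity (\sum_(k < K) F k).
  apply: etrans (esym (@widen_zero F I.2.+1 K _ _)); last first.
  - by move=> k /= Hk _; rewrite /F (leqNgt k) Hk andbF.
  - by rewrite leq_maxr.
  apply: eq_bigr => k _; rewrite /F; have := ltn_ord k; rewrite ltnS => ->; by rewrite andbT.
apply: etrans (@widen_zero F M K _ _) _ => //; first by rewrite leq_maxl.
by move=> k Hk _; rewrite /F HM //; case: ifP.
Qed.


Definition inI (I : nat * nat) k := (I.1 <= k <= I.2)%N.

Lemma count_le (Is : seq (nat * nat)) k (a : R) : 0 <= a -> pairwise disj_intervals Is ->
  \sum_(I <- Is) (if inI I k then a else 0) <= a.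
Proof.
move=> a0; elim: Is => [|I Is IH]; first by rewrite big_nil.
rewrite /= big_cons => /andP[Hall Hp].
case: ifP => Hk.
  rewrite big1_seq ?addr0 // => J /andP[_ JIs].
  have := allP Hall J JIs; rewrite /disj_intervals /inI.
  move: Hk; rewrite /inI => /andP[h1 h2].
  case: ifP => // /andP[h3 h4] /orP[] h5.
    by have := leq_ltn_trans h2 h5; rewrite ltnNge h3.
  by have := leq_ltn_trans h4 h5; rewrite ltnNge h1.
by rewrite add0r IH.
Qed.

Definition Eset x := [set s : R | exists Is : seq (nat * nat),
     admissible Is /\ s = \sum_(I <- Is) (interval_sum x I) ^+ 2].

Lemma isum_bound x M Is : (forall k, (M <= k)%N -> x k = 0) -> admissible Is ->
  \sum_(I <- Is) (interval_sum x I) ^+ 2 <= (\sum_(k < M) `|x k|) ^+ 2.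
Proof.
move=> HM /andP[_ Hp].
set S := \sum_(k < M) `|x k|.
have S0 : 0 <= S by apply: sumr_ge0 => k _.
pose T I := \sum_(k < M) (if inI I k then `|x k| else 0).
have HT I : `|interval_sum x I| <= T I.
  rewrite (isum_cut x M I HM) /T; apply: le_trans (ler_norm_sum _ _ _) _.
  by apply: ler_sum => k _; rewrite /inI; case: ifP; rewrite ?normr0.
have TS I : T I <= S.
  by apply: ler_sum => k _; case: ifP.
apply: (@le_trans _ _ (\sum_(I <- Is) (S * T I))).
  apply: ler_sum => I _; rewrite -(real_normK (num_real (interval_sum x I))) expr2.
  have T0 : 0 <= `|interval_sum x I| by [].
  apply: le_trans (ler_pM T0 T0 (HT I) (le_trans (HT I) (TS I))) _.
  by rewrite mulrC.
rewrite -mulr_sumr expr2 ler_wpM2l // /T exchange_big /=.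
by apply: ler_sum => k _; apply: count_le.
Qed.

Lemma Eset_has_sup x M : (forall k, (M <= k)%N -> x k = 0) -> has_sup (Eset x).
Proof.
move=> HM; split; first by exists 0, [::]; rewrite big_nil.
exists ((\sum_(k < M) `|x k|) ^+ 2) => s [Is [HIs ->]].
exact: (isum_bound x M Is HM HIs).
Qed.

Lemma Eset0 x : Eset x 0.
Proof. by exists [::]; rewrite big_nil. Qed.

Lemma Jnorm_sq x M : (forall k, (M <= k)%N -> x k = 0) -> Jnorm x ^+ 2 = sup (Eset x).
Proof.
move=> HM; rewrite /Jnorm sqr_sqrtr //.
exact: (sup_upper_bound (Eset_has_sup x M HM) (Eset0 x)).
Qed.


Lemma Iinf_sum x M : (forall k, (M <= k)%N -> x k = 0) -> Iinf x = \sum_(k < M) x k.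
Proof.
move=> HM; rewrite /Iinf; change (limn (fun n => \sum_(k < n) x k) = \sum_(k < M) x k).
apply/cvg_lim => //; apply: cvg_near_cst.
apply: filterS (nbhs_infty_ge M) => n /= Hn.
by apply: widen_zero => // k Hk _; apply: HM.
Qed.

Lemma isum_nz x M I : (forall k, (M <= k)%N -> x k = 0) -> Iinf x = 0 ->
  interval_sum x I != 0 ->
  (exists k, inI I k /\ x k != 0) /\ (exists k, ~~ inI I k /\ x k != 0).
Proof.
move=> HM H0 Hs; split.
  have [//|Hn] := pselect (exists k, inI I k /\ x k != 0).
  exfalso; move/eqP: Hs; apply; rewrite (isum_cut x M I HM) big1 // => k _.
  case: ifP => // Hk; apply/eqP/negP => Hx; apply: Hn; exists k; split => //.
  exact/negP.
have [//|Hn] := pselect (exists k, ~~ inI I k /\ x k != 0).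
exfalso; move/eqP: Hs; apply.
rewrite (isum_cut x M I HM); apply: etrans _ H0; rewrite (Iinf_sum x M HM); apply: eq_bigr => k _.
case: ifP => // /negbT Hk; apply/esym/eqP/negP => Hx; apply: Hn; exists k; split => //.
exact/negP.
Qed.

Lemma single_sq (d : nat -> R) p N : (forall n, d n != 0 -> n = p) ->
  (\sum_(n < N) d n) ^+ 2 = \sum_(n < N) d n ^+ 2.
Proof.
move=> Hd; elim: N => [|N IH]; first by rewrite !big_ord0 expr0n.
rewrite !big_ord_recr /=; have [dN0|dN] := eqVneq (d N) 0.
  by rewrite dN0 addr0 IH expr0n /= addr0.
have Np := Hd _ dN.
have Z : forall n : 'I_N, d n = 0.
  move=> n; apply/eqP; apply: contraT => Hn; have := Hd _ Hn.
  by move=> E; move: (ltn_ord n); rewrite E -Np ltnn.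
rewrite !big1 ?add0r // => n _; by rewrite Z // expr0n.
Qed.

Lemma two_terms (c : nat -> R) p q N : (forall n, c n != 0 -> n = p \/ n = q) ->
  (\sum_(n < N) c n) ^+ 2 <= 2 * \sum_(n < N) c n ^+ 2.
Proof.
move=> Hc.
pose d n := if n == p then c n else 0.
pose e n := c n - d n.
have Hd : forall n, d n != 0 -> n = p.
  by move=> n; rewrite /d; have [//|np] := eqVneq n p; rewrite eqxx.
have He : forall n, e n != 0 -> n = q.
  move=> n; rewrite /e /d; have [_|np] := eqVneq n p; first by rewrite subrr eqxx.
  by rewrite subr0 => /Hc [E|//]; rewrite E eqxx in np.
have E1 : \sum_(n < N) c n = \sum_(n < N) d n + \sum_(n < N) e n.
  by rewrite -big_split /=; apply: eq_bigr => n _; rewrite /e addrC subrK.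
have E2 : \sum_(n < N) c n ^+ 2 = \sum_(n < N) d n ^+ 2 + \sum_(n < N) e n ^+ 2.
  rewrite -big_split /=; apply: eq_bigr => n _; rewrite /e /d.
  by have [_|_] := eqVneq (n : nat) p; rewrite ?subrr ?subr0 expr0n /= ?addr0 ?add0r.
rewrite E1 E2 -(single_sq d p N Hd) -(single_sq e q N He).
set a := \sum_(n < N) d n; set b := \sum_(n < N) e n.
have : 0 <= (a - b) ^+ 2 by exact: sqr_ge0.
by rewrite sqrrB sqrrD => h; lra.
Qed.


Lemma isum_v (xs : nat -> nat -> R) (lam : nat -> R) N I :
  interval_sum (fun k => \sum_(n < N) lam n * xs n k) I =
  \sum_(n < N) lam n * interval_sum (xs n) I.
Proof.
rewrite /interval_sum exchange_big /=; apply: eq_bigr => n _.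
by rewrite mulr_sumr.
Qed.

Section Block.
Variable xs : nat -> nat -> R.
Hypothesis Hb : block_seq xs.

Lemma block_order n m i j : (n < m)%N -> xs n i != 0 -> xs m j != 0 -> (i < j)%N.
Proof.
case: Hb => _ [Hnz Hc]; elim: m j => [//|m IH] j.
rewrite ltnS leq_eqVlt => /orP[/eqP <-|Hnm] Hi Hj; first exact: Hc Hi Hj.
have [k Hk] := Hnz m.
exact: ltn_trans (IH k Hnm Hi Hk) (Hc _ _ _ Hk Hj).
Qed.

Lemma hi_exists n : exists h, xs n h != 0 /\ forall k, xs n k != 0 -> (k <= h)%N.
Proof.
case: Hb => [Hf [Hnz _]].
have [M HM] := Hf n.
have ub : forall i, xs n i != 0 -> (i <= M)%N.
  move=> i Hi; rewrite leqNgt; apply/negP => Hlt.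
  by move: Hi; rewrite HM ?eqxx // ltnW.
have [h Ph Hmax] := ex_maxnP (Hnz n) ub.
by exists h; split.
Qed.

Lemma supp_bound N : exists M, forall n k, (n < N)%N -> (M <= k)%N -> xs n k = 0.
Proof.
case: Hb => [Hf _]; elim: N => [|N [M IH]]; first by exists 0%N.
have [M' HM'] := Hf N.
exists (maxn M M') => n k; rewrite ltnS leq_eqVlt => /orP[/eqP ->|Hn] Hk.
  by apply: HM'; apply: leq_trans Hk; rewrite leq_maxr.
by apply: IH => //; apply: leq_trans Hk; rewrite leq_maxl.
Qed.

Hypothesis H0 : forall n, Iinf (xs n) = 0.

Lemma interval_two (lam : nat -> R) N I :
  (interval_sum (fun k => \sum_(n < N) lam n * xs n k) I) ^+ 2 <=
  2 * \sum_(n < N) (lam n * interval_sum (xs n) I) ^+ 2.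
Proof.
rewrite isum_v.
pose Pa n := exists i j, [/\ xs n i != 0, xs n j != 0, (i < I.1)%N & (I.1 <= j)%N].
pose Qb n := exists i j, [/\ xs n i != 0, xs n j != 0, (i <= I.2)%N & (I.2 < j)%N].
have uPa : forall n m, Pa n -> Pa m -> n = m.
  move=> n m [i1 [j1 [a1 b1 c1 d1]]] [i2 [j2 [a2 b2 c2 d2]]].
  case: (ltngtP n m) => // nm; exfalso.
    have := block_order _ _ _ _ nm b1 a2; rewrite ltnNge => /negP; apply.
    exact: ltnW (leq_trans c2 d1).
  have := block_order _ _ _ _ nm b2 a1; rewrite ltnNge => /negP; apply.
  exact: ltnW (leq_trans c1 d2).
have uQb : forall n m, Qb n -> Qb m -> n = m.
  move=> n m [i1 [j1 [a1 b1 c1 d1]]] [i2 [j2 [a2 b2 c2 d2]]].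
  case: (ltngtP n m) => // nm; exfalso.
    have := block_order _ _ _ _ nm b1 a2; rewrite ltnNge => /negP; apply.
    exact: ltnW (leq_ltn_trans c2 d1).
  have := block_order _ _ _ _ nm b2 a1; rewrite ltnNge => /negP; apply.
  exact: ltnW (leq_ltn_trans c1 d2).
have [p Hp] : exists p, forall n, Pa n -> n = p.
  case: (pselect (exists n, Pa n)) => [[p0 Hp0]|Hn].
    by exists p0 => n Hn; apply: uPa.
  by exists 0%N => n Hn2; exfalso; apply: Hn; exists n.
have [q Hq] : exists q, forall n, Qb n -> n = q.
  case: (pselect (exists n, Qb n)) => [[p0 Hp0]|Hn].
    by exists p0 => n Hn; apply: uQb.
  by exists 0%N => n Hn2; exfalso; apply: Hn; exists n.
apply: (two_terms (fun n => lam n * interval_sum (xs n) I) p q N) => n /=.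
rewrite mulf_eq0 negb_or => /andP[_ Hs].
case: Hb => [Hf _]; have [M HM] := Hf n.
have [[k [Hk Hxk]] [k' [Hk' Hxk']]] := isum_nz (xs n) M I HM (H0 n) Hs.
move: Hk Hk'; rewrite /inI => /andP[k1 k2]; rewrite negb_and -!ltnNge => /orP[] Hk'.
  by left; apply: Hp; exists k', k; split.
by right; apply: Hq; exists k, k'; split.
Qed.

End Block.

Lemma pairwise_filter_ {T : Type} (r : rel T) (p : pred T) (s : seq T) :
  pairwise r s -> pairwise r (seq.filter p s).
Proof.
elim: s => [//|a s IH] /= /andP[Ha Hs]; case: ifP => _ /=; last exact: IH.
rewrite IH // andbT all_filter; apply: sub_all Ha => b Hb /=.
by rewrite Hb implybT.
Qed.

Lemma trunc x lo hi Is : (forall k, x k != 0 -> (lo <= k <= hi)%N) -> admissible Is ->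
  exists Is', [/\ admissible Is', all (fun I => (lo <= I.1) && (I.2 <= hi))%N Is' &
    \sum_(I <- Is') (interval_sum x I) ^+ 2 = \sum_(I <- Is) (interval_sum x I) ^+ 2].
Proof.
move=> Hx /andP[Ha Hp].
pose tr (I : nat * nat) := (maxn I.1 lo, minn I.2 hi).
pose keep (I : nat * nat) := (maxn I.1 lo <= minn I.2 hi)%N.
have HM : forall k, (hi.+1 <= k)%N -> x k = 0.
  move=> k Hk; apply/eqP; apply: contraT => /Hx /andP[_ h]; lia.
have Etr : forall I, interval_sum x (tr I) = interval_sum x I.
  move=> I; rewrite (isum_cut x hi.+1 I HM) (isum_cut x hi.+1 (tr I) HM).
  apply: eq_bigr => k _; have [->|/Hx /andP[h1 h2]] := eqVneq (x k) 0.
    by case: ifP; case: ifP.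
  rewrite /tr /= geq_max leq_min h1 h2 !andbT.
  by case: (I.1 <= k)%N; case: (k <= I.2)%N.
have Enk : forall I, ~~ keep I -> interval_sum x (tr I) = 0.
  move=> I HI; rewrite (isum_cut x hi.+1 (tr I) HM) big1 // => k _.
  case: ifP => // /andP[h1 h2]; exfalso; move: HI h1 h2; rewrite /keep /tr /=; lia.
exists [seq tr J | J <- Is & keep J]; split.
- apply/andP; split.
    rewrite all_map; apply/allP => I; rewrite mem_filter => /andP[HI _] /=.
    exact: HI.
  rewrite pairwise_map; apply: pairwise_filter_.
  elim: Is Hp {Ha} => [//|I Is IH] /= /andP[HI Hp]; rewrite IH // andbT.
  apply/allP => J HJ; have := allP HI J HJ; rewrite /disj_intervals /=; lia.
- rewrite all_map; apply/allP => I _ /=; lia.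
- rewrite big_map big_filter big_mkcond /=; apply: eq_bigr => I _.
  case: ifP => [_|/negbT HI]; first by rewrite Etr.
  by rewrite -Etr Enk // expr0n.
Qed.

Section Win.
Variable xs : nat -> nat -> R.
Hypothesis Hb : block_seq xs.
Variable hi : nat -> nat.
Hypothesis Hhi : forall n, xs n (hi n) != 0 /\ forall k, xs n k != 0 -> (k <= hi n)%N.

Definition lo n := if n is n'.+1 then (hi n').+1 else 0%N.

Lemma hi_lt n m : (n < m)%N -> (hi n < hi m)%N.
Proof. by move=> nm; apply: (block_order _ Hb _ _ _ _ nm (Hhi n).1 (Hhi m).1). Qed.

Lemma supp_in n k : xs n k != 0 -> (lo n <= k <= hi n)%N.
Proof.
move=> Hk; rewrite (Hhi n).2 // andbT; case: n Hk => [//|n] Hk /=.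
exact: (block_order _ Hb _ _ _ _ (ltnSn n) (Hhi n).1 Hk).
Qed.

Lemma lo_hi n : (lo n <= hi n)%N.
Proof. by have /andP[] := supp_in _ _ (Hhi n).1. Qed.

Lemma other0 n m k : m != n -> (lo n <= k <= hi n)%N -> xs m k = 0.
Proof.
move=> mn /andP[h1 h2]; apply/eqP; apply: contraT => Hk.
case: (ltngtP m n) => [mn'|nm|E]; last by rewrite E eqxx in mn.
  case: n mn mn' h1 h2 => [//|n] _ mn' h1 h2 /=.
  have h3 := (Hhi m).2 k Hk.
  have h4 : (hi m <= hi n)%N.
    move: mn'; rewrite ltnS leq_eqVlt => /orP[/eqP ->//|/hi_lt]; exact: ltnW.
  move: h1 => /=; lia.
have := block_order _ Hb _ _ _ _ nm (Hhi n).1 Hk; lia.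
Qed.

Definition catF (F : nat -> seq (nat * nat)) K := \big[cat/[::]]_(n < K) F n.

Lemma sum_catF (f : nat * nat -> R) F K :
  \sum_(I <- catF F K) f I = \sum_(n < K) \sum_(I <- F n) f I.
Proof.
elim: K => [|K IH]; first by rewrite /catF !big_ord0 big_nil.
by rewrite /catF !big_ord_recr /= big_cat -IH.
Qed.

Lemma catF_adm F K : (forall n, admissible (F n)) ->
  (forall n, all (fun J => (lo n <= J.1) && (J.2 <= hi n))%N (F n)) ->
  admissible (catF F K) /\ (forall J, J \in catF F K -> (J.2 < lo K)%N).
Proof.
move=> Fa Fw; elim: K => [|K [IHa IHl]]; first by rewrite /catF big_ord0.
have -> : catF F K.+1 = catF F K ++ F K by rewrite /catF big_ord_recr.
move: IHa (Fa K) => /andP[a1 p1] /andP[a2 p2]; split.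
  rewrite /admissible all_cat a1 a2 pairwise_cat p1 p2 !andbT /=.
  apply/allrelP => J1 J2 H1 H2; rewrite /disj_intervals.
  have := IHl J1 H1; have := allP (Fw K) J2 H2 => /andP[h1 h2] h3.
  by rewrite (leq_trans h3 h1).
move=> J; rewrite mem_cat => /orP[HJ|HJ] /=.
  have := IHl J HJ; have := lo_hi K; simpl; lia.
by have := allP (Fw K) J HJ => /andP[_ h]; rewrite ltnS.
Qed.

End Win.

End H.

Local Close Scope classical_set_scope.

Theorem mainTheorem12 (R : realType) (xs : nat -> nat -> R) (eps alpha : R) :
  block_seq xs -> 0 < eps -> eps < 1 -> 0 < alpha ->
  (forall n, Iinf (xs n) = 0) ->
  (forall n, `|Jnorm (xs n) - alpha| < alpha * eps) ->
  forall (N : nat) (lam : nat -> R),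
    let v := fun k => \sum_(n < N) lam n * xs n k in
    let l2 := Num.sqrt (\sum_(n < N) lam n ^+ 2) in
    (1 - eps) * alpha * l2 <= Jnorm v /\
    Jnorm v <= Num.sqrt 2 * (1 + eps) * alpha * l2.
Proof.
move=> Hb e0 e1 a0 H0 Hn N lam v l2.
set S2 := \sum_(n < N) lam n ^+ 2.
have S20 : 0 <= S2 by apply: sumr_ge0 => n _; exact: sqr_ge0.
have [M HM] := supp_bound _ Hb N.
have HMv : forall k, (M <= k)%N -> v k = 0.
  by move=> k Hk; rewrite /v big1 // => n _; rewrite HM // mulr0.
have Hfin : forall n, exists Mn, forall k, (Mn <= k)%N -> xs n k = 0.
  by move=> n; case: Hb => Hf _; exact: Hf.
have Jge0 : forall x : nat -> R, 0 <= Jnorm x by move=> x; exact: sqrtr_ge0.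
have Jlo : forall n, (1 - eps) * alpha < Jnorm (xs n).
  by move=> n; have := Hn n; rewrite ltr_norml => /andP[h1 h2]; lra.
have Jhi : forall n, Jnorm (xs n) < (1 + eps) * alpha.
  by move=> n; have := Hn n; rewrite ltr_norml => /andP[h1 h2]; lra.
set c := (1 + eps) * alpha.
set c' := (1 - eps) * alpha.
have c0 : 0 <= c by rewrite /c; apply: mulr_ge0; lra.
have c'0 : 0 <= c' by rewrite /c'; apply: mulr_ge0; lra.
have UB : forall Is, admissible Is ->
    \sum_(I <- Is) (interval_sum v I) ^+ 2 <= 2 * c ^+ 2 * S2.
  move=> Is HIs.
  apply: le_trans (ler_sum _ (fun I _ => interval_two _ Hb H0 lam N I)) _.
  rewrite -mulr_sumr exchange_big /= -mulrA ler_wpM2l //.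
  rewrite /S2 mulr_sumr; apply: ler_sum => n _.
  under eq_bigr do rewrite exprMn.
  rewrite -mulr_sumr mulrC ler_wpM2r ?sqr_ge0 //.
  have [Mn HMn] := Hfin n.
  apply: le_trans (_ : Jnorm (xs n) ^+ 2 <= _).
    rewrite (Jnorm_sq _ _ HMn); apply: (sup_upper_bound (Eset_has_sup _ _ HMn)).
    by exists Is.
  have := Jhi n; rewrite -/c => h1; have h0 := Jge0 (xs n); nra.
have hsv : has_sup (Eset v).
  split; first by exists 0; exact: Eset0 _.
  by exists (2 * c ^+ 2 * S2) => s [Is [HIs ->]]; exact: UB.
have Jv2 : Jnorm v ^+ 2 = sup (Eset v) := Jnorm_sq _ _ HMv.
split; last first.
  have -> : Jnorm v = Num.sqrt (sup (Eset v)) by [].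
  have -> : Num.sqrt 2 * (1 + eps) * alpha * l2 = Num.sqrt (2 * c ^+ 2 * S2).
    rewrite -(mulrA _ (1 + eps)) -/c sqrtrM; last by rewrite mulr_ge0 ?sqr_ge0.
    by rewrite sqrtrM // sqrtr_sqr ger0_norm.
  rewrite ler_sqrt; last by apply: mulr_ge0 => //; rewrite mulr_ge0 ?sqr_ge0.
  have := @ge_sup R (Eset v) (2 * c ^+ 2 * S2); apply.
    by exists 0; exact: Eset0 _.
  by move=> s [Is [HIs ->]]; exact: UB.
have /choice [hi Hhi] := hi_exists _ Hb.
have HF : forall n, exists F, [/\ admissible F,
    all (fun J => (lo hi n <= J.1) && (J.2 <= hi n))%N F &
    c' ^+ 2 < \sum_(I <- F) (interval_sum (xs n) I) ^+ 2].
  move=> n; have [Mn HMn] := Hfin n.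
  have hs := Eset_has_sup _ _ HMn.
  have cJ : c' ^+ 2 < sup (Eset (xs n)).
    rewrite -(Jnorm_sq _ _ HMn); have := Jlo n; rewrite -/c' => h1; nra.
  have hpos : 0 < sup (Eset (xs n)) - c' ^+ 2 by rewrite subr_gt0.
  have [e [Is [HIs ->]] He] := sup_adherent hpos hs.
  have [Is' [A1 A2 A3]] := trunc _ _ _ _ (supp_in _ Hb _ Hhi n) HIs.
  by exists Is'; split => //; rewrite A3; move: He; rewrite opprB addrC subrK.
have /choice [F HF'] := HF.
have Fa : forall n, admissible (F n) by move=> n; case: (HF' n).
have Fw : forall n, all (fun J => (lo hi n <= J.1) && (J.2 <= hi n))%N (F n).
  by move=> n; case: (HF' n).
have [Ga _] := catF_adm _ Hb _ Hhi _ N Fa Fw.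
have L1 : \sum_(I <- catF F N) (interval_sum v I) ^+ 2 <= Jnorm v ^+ 2.
  by rewrite Jv2; apply: (sup_upper_bound hsv); exists (catF F N).
have L2 : c' ^+ 2 * S2 <= \sum_(I <- catF F N) (interval_sum v I) ^+ 2.
  rewrite sum_catF /S2 mulr_sumr; apply: ler_sum => n _.
  have E : \sum_(I <- F n) (interval_sum v I) ^+ 2 =
           lam n ^+ 2 * \sum_(I <- F n) (interval_sum (xs n) I) ^+ 2.
    rewrite mulr_sumr big_seq [RHS]big_seq; apply: eq_bigr => I HI.
    rewrite -exprMn; congr (_ ^+ 2).
    rewrite /v isum_v (bigD1 n) //= big1 ?addr0 // => m Hm.
    have /andP[w1 w2] := allP (Fw n) I HI.
    rewrite /interval_sum big1_seq ?mulr0 // => k /andP[_].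
    rewrite mem_index_iota => /andP[k1 k2].
    apply: (other0 _ Hb _ Hhi n) => //; last by apply/andP; split; lia.
  rewrite E mulrC ler_wpM2l ?sqr_ge0 //.
  by case: (HF' n) => _ _ /ltW.
have Lv : c' ^+ 2 * S2 <= Jnorm v ^+ 2 := le_trans L2 L1.
have -> : c' * l2 = Num.sqrt (c' ^+ 2 * S2).
  by rewrite sqrtrM ?sqr_ge0 // sqrtr_sqr ger0_norm.
rewrite -(ger0_norm (Jge0 v)) -sqrtr_sqr ler_sqrt //.
exact: sqr_ge0.
Qed.
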